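(* Let $f(t)=1+\sum_{i=1}^{d}f_{i-1}t^i$ and $g(t)=1+\sum_{i=1}^{d'}g_{i-1}t^i$ be $f$-polynomials of simplicial complexes. Then (a) the product $f(t)g(t)$ is the $f$-polynomial of a simplicial complex, and (b) the Hadamard product $f(t)\circ g(t)=1+\sum_{i=1}^{\min\{d,d'\}}f_{i-1}g_{i-1}t^i$ is the $f$-polynomial of a simplicial complex.
   Context: The $f$-polynomial of a simplicial complex is $\sum_{i\ge0}f_{i-1}t^i$, where $f_{i-1}$ is the number of faces of cardinality $i$ (constant term $1$ for the empty face). *)

(* Defs.v *)
From HB Require Import structures.
From mathcomp Require Import all_boot all_order all_algebra.
Set Implicit Arguments. Unset Strict Implicit. Unset Printing Implicit Defensive.
Import GRing.Theory.
Local Open Scope ring_scope.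

Definition is_simplicial_complex (n : nat) (D : {set {set 'I_n}}) : Prop :=
  set0 \in D /\ (forall F G : {set 'I_n}, F \in D -> G \subset F -> G \in D).

(* f-polynomial: sum over faces F of t^{|F|} (constant term 1 = empty face). *)
Definition fpoly (n : nat) (D : {set {set 'I_n}}) : {poly int} :=
  \sum_(F in D) 'X^#|F|.

Definition is_fpoly (p : {poly int}) : Prop :=
  exists n (D : {set {set 'I_n}}), is_simplicial_complex D /\ fpoly D = p.

Definition hadamard (p q : {poly int}) : {poly int} :=
  \poly_(i < minn (size p) (size q)) (p`_i * q`_i).

(* Main.v *)
Require Import Defs.
From HB Require Import structures.
From mathcomp Require Import all_boot all_order all_algebra.
Set Implicit Arguments. Unset Strict Implicit. Unset Printing Implicit Defensive.

Definition cplx (T : finType) (D : {set {set T}}) : Prop :=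
  set0 \in D /\ (forall F G : {set T}, F \in D -> G \subset F -> G \in D).
Definition fpT (T : finType) (D : {set {set T}}) : {poly int} :=
  (\sum_(F in D) 'X^#|F|)%R.

Lemma transfer (T : finType) (D : {set {set T}}) : cplx D -> is_fpoly (fpT D).
Proof.
move=> [D0 Dc].
pose phi := fun F : {set T} => enum_rank @: F.
have phi_inj : injective phi by apply: imset_inj; exact: enum_rank_inj.
exists #|T|, (phi @: D); split; last first.
  rewrite /fpoly /fpT big_imset /=; last by move=> x y _ _; apply: phi_inj.
  by apply: eq_bigr => F _; rewrite card_imset //; exact: enum_rank_inj.
split.
  by apply/imsetP; exists set0 => //; rewrite /phi imset0.
move=> F G /imsetP [F' F'D ->] GF.
apply/imsetP; exists (enum_val @: G).
  apply: (Dc F') => //; apply/subsetP => x /imsetP [y yG ->].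
  have := subsetP GF y yG; case/imsetP => z zF ->; by rewrite enum_rankK.
rewrite /phi -imset_comp; apply/setP => y; apply/idP/imsetP.
  by move=> yG; exists y => //=; rewrite enum_valK.
by move=> [z zG ->] /=; rewrite enum_valK.
Qed.

Section Join.
Variables (T U : finType).
Definition lp (S : {set T + U}) : {set T} := [set x | inl x \in S].
Definition rp (S : {set T + U}) : {set U} := [set y | inr y \in S].
Definition jn (p : {set T} * {set U}) : {set T + U} := inl @: p.1 :|: inr @: p.2.

Lemma lp_jn p : lp (jn p) = p.1.
Proof.
apply/setP => x; rewrite !inE; apply/idP/idP.
  by case/orP => /imsetP [y yA] e; first [by injection e => -> | done].
by move=> xA; rewrite imset_f.
Qed.
Lemma rp_jn p : rp (jn p) = p.2.
Proof.
apply/setP => x; rewrite !inE; apply/idP/idP.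
  by case/orP => /imsetP [y yA] e; first [by injection e => -> | done].
by move=> xA; rewrite orbC imset_f.
Qed.
Lemma jn_lr S : jn (lp S, rp S) = S.
Proof.
apply/setP => [[x|y]]; rewrite !inE /=; apply/idP/idP.
- by case/orP => /imsetP [z]; rewrite inE => zS e; first [by injection e => -> | done].
- by move=> h; rewrite imset_f // inE.
- by case/orP => /imsetP [z]; rewrite inE => zS e; first [by injection e => -> | done].
- by move=> h; rewrite orbC imset_f // inE.
Qed.
Lemma card_jn p : #|jn p| = #|p.1| + #|p.2|.
Proof.
rewrite cardsU !card_imset //; try by move=> ? ? [].
suff -> : inl @: p.1 :&: inr @: p.2 = set0 by rewrite cards0 subn0.
apply/setP => z; rewrite !inE; apply/negP => /andP [/imsetP [a _ ->] /imsetP [b _]].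
done.
Qed.

Lemma join_ok (D : {set {set T}}) (E : {set {set U}}) :
  cplx D -> cplx E -> cplx (jn @: setX D E) /\ fpT (jn @: setX D E) = (fpT D * fpT E)%R.
Proof.
move=> [D0 Dc] [E0 Ec]; split.
  split.
    apply/imsetP; exists (set0, set0); first by rewrite inE /= D0 E0.
    by rewrite /jn /= !imset0 setU0.
  move=> F G /imsetP [p]; rewrite inE => /andP [p1 p2] -> GF.
  apply/imsetP; exists (lp G, rp G); last by rewrite jn_lr.
  rewrite inE /=; apply/andP; split.
    apply: (Dc p.1) => //; rewrite -(lp_jn p); apply/subsetP => x; rewrite !inE.
    by move=> h; rewrite -in_setU; apply: (subsetP GF).
  apply: (Ec p.2) => //; rewrite -(rp_jn p); apply/subsetP => x; rewrite !inE.
  by move=> h; rewrite -in_setU; apply: (subsetP GF).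
rewrite /fpT big_imset /=; last first.
  move=> p q _ _ e; have h1 := lp_jn p; have h2 := rp_jn p; rewrite e !(lp_jn, rp_jn) in h1 h2; by case: p q e h1 h2 => [? ?] [? ?] /= _ -> ->.
rewrite big_distrlr /= pair_big_dep /=.
rewrite [RHS](eq_bigl (fun p => p \in setX D E)); last by move=> [a b]; rewrite inE.
by apply: eq_bigr => p _; rewrite card_jn GRing.exprD.
Qed.
End Join.

Section Rank.
Variable n : nat.
Implicit Types (A : {set 'I_n}) (x y : 'I_n).
Definition rk A x : nat := #|[set a in A | (a < x)%N]|.

Lemma rk_lt A x y : x \in A -> (x < y)%N -> (rk A x < rk A y)%N.
Proof.
move=> xA xy; apply: proper_card; apply/properP; split.
  apply/subsetP => a; rewrite !inE => /andP [-> ax] /=; exact: ltn_trans ax xy.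
by exists x; rewrite !inE ?xA ?xy ?ltnn.
Qed.
Lemma rk_le A x y : (x <= y)%N -> (rk A x <= rk A y)%N.
Proof.
move=> xy; apply: subset_leq_card; apply/subsetP => a; rewrite !inE => /andP [-> ax] /=.
exact: leq_trans ax xy.
Qed.
Lemma rk_ltE A x y : x \in A -> y \in A -> (rk A x < rk A y)%N = (x < y)%N.
Proof.
move=> xA yA; apply/idP/idP; last exact: rk_lt.
move=> h; rewrite ltnNge; apply/negP => /(rk_le A); by rewrite leqNgt h.
Qed.
Lemma rk_inj A x y : x \in A -> y \in A -> rk A x = rk A y -> x = y.
Proof.
move=> xA yA e; case: (ltngtP (val x) (val y)) => h.
- by have := rk_lt xA h; rewrite e ltnn.
- by have := rk_lt yA h; rewrite e ltnn.
- exact: val_inj.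
Qed.
Lemma rk_bound A x : x \in A -> (rk A x < #|A|)%N.
Proof.
move=> xA; apply: proper_card; apply/properP; split.
  by apply/subsetP => a; rewrite !inE => /andP [].
by exists x => //; rewrite !inE ltnn andbF.
Qed.
Lemma rk_surj A k : (k < #|A|)%N -> exists2 x, x \in A & rk A x = k.
Proof.
move=> kA.
pose s := map (rk A) (enum A).
have us : uniq s.
  rewrite map_inj_in_uniq ?enum_uniq // => x y; rewrite !mem_enum; exact: rk_inj.
have sub : {subset s <= iota 0 #|A|}.
  by move=> i /mapP [x]; rewrite mem_enum mem_iota add0n => /rk_bound h ->.
have e : size (iota 0 #|A|) = size s by rewrite size_iota size_map -cardE.
have [_ h] := uniq_min_size us sub (eq_leq e).
have : k \in s by rewrite h mem_iota add0n.
by case/mapP => x; rewrite mem_enum => xA ->; exists x.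
Qed.
End Rank.

Section Had.
Variables n m : nat.
Implicit Types (S G : {set 'I_n * 'I_m}).
Definition mono S := forall p q, p \in S -> q \in S -> (p.1 < q.1)%N = (p.2 < q.2)%N.
Definition hd (p : {set 'I_n} * {set 'I_m}) : {set 'I_n * 'I_m} :=
  [set q | [&& q.1 \in p.1, q.2 \in p.2 & rk p.1 q.1 == rk p.2 q.2]].

Lemma mono_sub S G : mono S -> G \subset S -> mono G.
Proof. by move=> mS GS p q pG qG; apply: mS; apply: (subsetP GS). Qed.

Lemma mono_eq S p q : mono S -> p \in S -> q \in S -> (p.1 == q.1) = (p.2 == q.2).
Proof.
move=> mS pS qS; have h1 := mS p q pS qS; have h2 := mS q p qS pS.
rewrite -!val_eqE /=.
case: (ltngtP (val p.1) (val q.1)) => e.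
- by move: h1; rewrite e => /esym h; rewrite (ltn_eqF h).
- by move: h2; rewrite e => /esym h; rewrite eq_sym (ltn_eqF h).
- move: h1 h2; rewrite e ltnn.
  move=> h1 h2; apply/esym/eqP; move: h1 h2; by case: (ltngtP (nat_of_ord p.2) (nat_of_ord q.2)).
Qed.

Lemma fst_inj S : mono S -> {in S &, injective fst}.
Proof.
move=> mS [a b] [c d] pS qS /= e; have := mono_eq mS pS qS; rewrite /= e eqxx.
by move/esym/eqP => ->.
Qed.
Lemma snd_inj S : mono S -> {in S &, injective snd}.
Proof.
move=> mS [a b] [c d] pS qS /= e; have := mono_eq mS pS qS; rewrite /= e eqxx.
by move/eqP => ->.
Qed.

Lemma rk_mono S q : mono S -> q \in S -> rk (fst @: S) q.1 = rk (snd @: S) q.2.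
Proof.
move=> mS qS; rewrite /rk.
have -> : [set a in fst @: S | (a < q.1)%N] = fst @: [set r in S | (r.1 < q.1)%N].
  apply/setP => a; rewrite inE; apply/idP/idP.
    by case/andP => /imsetP [r rS ->] h; apply: imset_f; rewrite inE rS.
  by case/imsetP => r; rewrite inE => /andP [rS h] ->; rewrite imset_f.
have -> : [set a in snd @: S | (a < q.2)%N] = snd @: [set r in S | (r.2 < q.2)%N].
  apply/setP => a; rewrite inE; apply/idP/idP.
    by case/andP => /imsetP [r rS ->] h; apply: imset_f; rewrite inE rS.
  by case/imsetP => r; rewrite inE => /andP [rS h] ->; rewrite imset_f.
rewrite !card_in_imset.
- by apply: eq_card => r; rewrite !inE; case rS: (r \in S) => //=; exact: mS.
- by move=> r s; rewrite !inE => /andP [rS _] /andP [sS _]; exact: (snd_inj mS).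
- by move=> r s; rewrite !inE => /andP [rS _] /andP [sS _]; exact: (fst_inj mS).
Qed.

Lemma mono_hd (p : {set 'I_n} * {set 'I_m}) : mono (hd p).
Proof.
move=> q r; rewrite !inE => /and3P [q1 q2 /eqP e1] /and3P [r1 r2 /eqP e2].
by rewrite -(rk_ltE q1 r1) -(rk_ltE q2 r2) e1 e2.
Qed.

Lemma fst_hd (p : {set 'I_n} * {set 'I_m}) : #|p.1| = #|p.2| -> fst @: hd p = p.1.
Proof.
move=> e; apply/setP => x; apply/idP/idP.
  by case/imsetP => q; rewrite inE => /and3P [h _ _] ->.
move=> xA; have := rk_bound xA; rewrite e => /rk_surj [y yB ey].
by apply/imsetP; exists (x, y) => //; rewrite inE /= xA yB ey eqxx.
Qed.
Lemma snd_hd (p : {set 'I_n} * {set 'I_m}) : #|p.1| = #|p.2| -> snd @: hd p = p.2.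
Proof.
move=> e; apply/setP => y; apply/idP/idP.
  by case/imsetP => q; rewrite inE => /and3P [_ h _] ->.
move=> yB; have := rk_bound yB; rewrite -e => /rk_surj [x xA ex].
by apply/imsetP; exists (x, y) => //; rewrite inE /= xA yB ex eqxx.
Qed.

Lemma hd_mono S : mono S -> S = hd (fst @: S, snd @: S).
Proof.
move=> mS; apply/setP => q; rewrite inE /=; apply/idP/idP.
  by move=> qS; rewrite !imset_f //= rk_mono.
case/and3P => /imsetP [r rS e1] q2 /eqP e.
have rq : r.2 = q.2.
  apply: (@rk_inj _ (snd @: S)) => //; first exact: imset_f.
  by rewrite -e e1 rk_mono.
by case: q r rS e1 rq {q2 e} => [a b] [c d] /= rS -> <-.
Qed.

Lemma card_mono S : mono S -> #|fst @: S| = #|S| /\ #|snd @: S| = #|S|.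
Proof. by move=> mS; rewrite !card_in_imset //; [apply: (snd_inj mS) | apply: (fst_inj mS)]. Qed.

Variables (D : {set {set 'I_n}}) (E : {set {set 'I_m}}).
Definition PP := [set p in setX D E | #|p.1| == #|p.2|].

Lemma had_cplx : cplx D -> cplx E -> cplx (hd @: PP).
Proof.
move=> [D0 Dc] [E0 Ec]; split.
  apply/imsetP; exists (set0, set0); first by rewrite !inE /= D0 E0 !cards0.
  by apply/setP => q; rewrite !inE.
move=> F G /imsetP [p]; rewrite !inE => /andP [/andP [p1 p2] /eqP pe] -> GF.
have mG := mono_sub (@mono_hd p) GF.
have [c1 c2] := card_mono mG.
apply/imsetP; exists (fst @: G, snd @: G); last exact: hd_mono.
rewrite !inE /= c1 c2 eqxx andbT; apply/andP; split.
  apply: (Dc p.1) => //; rewrite -(fst_hd pe); exact: imsetS.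
apply: (Ec p.2) => //; rewrite -(snd_hd pe); exact: imsetS.
Qed.

Lemma had_sum : fpT (hd @: PP) = (\sum_(p in PP) 'X^#|p.1|)%R.
Proof.
rewrite /fpT big_imset /=.
  apply: eq_bigr => p; rewrite inE => /andP [_ /eqP pe].
  by have [c1 _] := card_mono (@mono_hd p); rewrite -c1 fst_hd.
move=> p q; rewrite !inE => /andP [_ /eqP pe] /andP [_ /eqP qe] e.
have h1 := fst_hd pe; have h2 := snd_hd pe; rewrite e fst_hd ?snd_hd // in h1 h2.
by case: p q {pe qe e} h1 h2 => [? ?] [? ?] /= -> ->.
Qed.
End Had.
Import GRing.Theory.
Local Open Scope ring_scope.

Lemma coef_fpT (T : finType) (D : {set {set T}}) i :
  (fpT D)`_i = \sum_(A in D) ((i == #|A|)%N)%:R.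
Proof. by rewrite /fpT coef_sum; apply: eq_bigr => A _; rewrite coefXn. Qed.

Lemma had_poly n m (D : {set {set 'I_n}}) (E : {set {set 'I_m}}) :
  \sum_(p in PP D E) 'X^#|p.1| = hadamard (fpT D) (fpT E).
Proof.
have key : forall i, (\sum_(p in PP D E) 'X^#|p.1| : {poly int})`_i = (fpT D)`_i * (fpT E)`_i.
  move=> i; rewrite coef_sum !coef_fpT big_distrlr /= pair_big_dep /=.
  rewrite (eq_bigl (fun p => (p \in setX D E) && (#|p.1| == #|p.2|)%N)); last first.
    by move=> p; rewrite !inE.
  rewrite [RHS](eq_bigl (fun p => p \in setX D E)); last by move=> [a b]; rewrite inE.
  rewrite big_mkcondr /=; apply: eq_bigr => p _; rewrite coefXn.
  case: (eqVneq i #|p.1|) => [->|ia]; case: (eqVneq #|p.1| #|p.2|) => [e|ab] /=.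
  - by rewrite mulr1.
  - by rewrite mulr0.
  - by rewrite mul0r.
  - by rewrite mul0r.
apply/polyP => i; rewrite key coef_poly.
case: ifP => // /negbT; rewrite -leqNgt geq_min => /orP [] h.
  by rewrite nth_default ?mul0r.
by rewrite [(fpT E)`_i]nth_default ?mulr0.
Qed.

Unset Implicit Arguments.

Theorem proposition4p3 (f g : {poly int}) :
  is_fpoly f -> is_fpoly g -> is_fpoly (f * g) /\ is_fpoly (hadamard f g).
Proof.
move=> [n [D [cD <-]]] [m [E [cE <-]]]; split.
  have [c e] := join_ok cD cE.
  by have := transfer c; rewrite e.
have := transfer (had_cplx cD cE).
by rewrite had_sum had_poly.
Qed.
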